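(* For the $m\times n$ grid-with-a-hole graph $G^\square_{m,n}$, the fraction of balanced $k$-partitions $Z_{\mu^{\mathrm{balanced}}_k}/Z_{\mu^*_k}$ is lower bounded by $\Omega\!\left(\frac{1}{(m+n)^k\Theta(1)^k}\right)$.
   Context: The $m\times n$ grid graph $G_{m,n}$ has vertices $(i,j)$, $i\in[m]$, $j\in[n]$, with edges between horizontally or vertically adjacent vertices. For $m,n\ge4$, $G^\square_{m,n}$ is $G_{m,n}$ with the vertices $\{(i,j):2\le i\le m-1,\,2\le j\le n-1\}$ removed. For a graph $G$ and $k$, the spanning tree distribution gives a partition $(P_1,\dots,P_k)$ of $V(G)$ the weight $\mu^*_k(P_1,\dots,P_k)=\prod_{i=1}^kT(P_i)$, where $T(P_i)$ is the number of spanning trees of $G[P_i]$; $Z_{\mu^*_k}$ is the total weight, and $Z_{\mu^{\mathrm{balanced}}_k}$ is the total weight of balanced partitions, i.e. those with $|P_1|=\dots=|P_k|$. *)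

(* Defs.v *)
From mathcomp Require Import all_boot all_order all_algebra.
Set Implicit Arguments. Unset Strict Implicit. Unset Printing Implicit Defensive.
Import Order.TTheory GRing.Theory Num.Theory.

Section SpanningTrees.
Variables (V : finType) (adj : rel V).

Definition induced_edges (P : {set V}) : {set {set V}} :=
  [set E : {set V} | [exists x : V, exists y : V,
      [&& E == [set x; y], adj x y, x \in P & y \in P]]].

Definition is_spanning_tree (P : {set V}) (F : {set {set V}}) : bool :=
  [&& F \subset induced_edges P, P != set0, #|F| == #|P| - 1 &
      [forall x in P, forall y in P,
         connect (fun u v : V => [set u; v] \in F) x y]].

Definition num_spanning_trees (P : {set V}) : nat :=
  #|[set F : {set {set V}} | is_spanning_tree P F]|.

Definition block (k : nat) (f : {ffun V -> 'I_k}) (i : 'I_k) : {set V} :=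
  [set v | f v == i].

Definition st_weight (k : nat) (f : {ffun V -> 'I_k}) : nat :=
  \prod_(i < k) num_spanning_trees (block f i).

(* Z_{mu*_k}: total weight of all partitions into k (labelled) blocks.
   Partitions with an empty block get weight 0 since T(emptyset) = 0. *)
Definition Z_st (k : nat) : nat := \sum_(f : {ffun V -> 'I_k}) st_weight f.

Definition balanced (k : nat) (f : {ffun V -> 'I_k}) : bool :=
  [forall i : 'I_k, forall j : 'I_k, #|block f i| == #|block f j|].

Definition Z_balanced (k : nat) : nat :=
  \sum_(f : {ffun V -> 'I_k} | balanced f) st_weight f.
End SpanningTrees.

(* vertices (i,j), 0-indexed: i < m, j < n; interior vertices 1 <= i <= m-2,
   1 <= j <= n-2 (i.e. 2..m-1, 2..n-1 in 1-indexing) are removed. *)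
Definition on_boundary (m n : nat) (p : 'I_m * 'I_n) : bool :=
  [|| p.1 == 0 :> nat, p.1 == m.-1 :> nat, p.2 == 0 :> nat | p.2 == n.-1 :> nat].

Notation hole_vertex m n := {p : 'I_m * 'I_n | on_boundary p}.

Definition grid_adj (m n : nat) (p q : 'I_m * 'I_n) : bool :=
  ((p.1 == q.1) && ((p.2.+1 == q.2 :> nat) || (q.2.+1 == p.2 :> nat))) ||
  ((p.2 == q.2) && ((p.1.+1 == q.1 :> nat) || (q.1.+1 == p.1 :> nat))).

Definition hole_adj (m n : nat) : rel (hole_vertex m n) :=
  fun p q => grid_adj (val p) (val q).

(* Main.v *)
Require Import Defs.
From mathcomp Require Import all_boot all_order all_algebra.
From mathcomp Require Import zify.
Import Order.TTheory GRing.Theory Num.Theory.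

Definition hpos (a b i j : nat) : nat :=
  if i == 0 then j else if j == b then b + i else if i == a then a + b + (b - j)
  else 2 * b + a + (a - i).

Definition pci (a b t : nat) : nat :=
  if t < b.+1 then 0 else if t < a + b + 1 then t - b else if t < a + 2 * b + 1 then a
  else 2 * a + 2 * b - t.
Definition pcj (a b t : nat) : nat :=
  if t < b.+1 then t else if t < a + b + 1 then b else if t < a + 2 * b + 1 then a + 2 * b - t
  else 0.

Lemma hpos_spec a b i j :
  (i = 0 /\ hpos a b i j = j) \/ (i <> 0 /\ j = b /\ hpos a b i j = b + i) \/
      (i <> 0 /\ j <> b /\ i = a /\ hpos a b i j = a + b + (b - j)) \/
      (i <> 0 /\ j <> b /\ i <> a /\ hpos a b i j = 2 * b + a + (a - i)).
Proof.
rewrite /hpos; case: eqP => ? /=; first by left.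
case: eqP => ? /=; first by right; left.
case: eqP => ? /=; first by right; right; left.
by right; right; right; lia.
Qed.

Lemma pc_spec a b t :
  (t < b.+1 /\ pci a b t = 0 /\ pcj a b t = t) \/
      (b.+1 <= t /\ t < a + b + 1 /\ pci a b t = t - b /\ pcj a b t = b) \/
      (a + b + 1 <= t /\ t < a + 2 * b + 1 /\ pci a b t = a /\ pcj a b t = a + 2 * b - t) \/
      (a + 2 * b + 1 <= t /\ pci a b t = 2 * a + 2 * b - t /\ pcj a b t = 0).
Proof.
rewrite /pci /pcj; case: ltnP => h1 /=; first by left.
case: ltnP => h2 /=; first by right; left; lia.
case: ltnP => h3 /=; first by right; right; left; lia.
by right; right; right; lia.
Qed.

Definition bnd (a b i j : nat) := i = 0 \/ i = a \/ j = 0 \/ j = b.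

Lemma hpos_specb a b i j : i <= a -> j <= b -> bnd a b i j ->
  (i = 0 /\ hpos a b i j = j) \/ (0 < i /\ j = b /\ hpos a b i j = b + i) \/
      (0 < i /\ j < b /\ i = a /\ hpos a b i j = a + b + (b - j)) \/
      (0 < i /\ j = 0 /\ i < a /\ hpos a b i j = 2 * b + a + (a - i)).
Proof.
move=> hi hj hb; rewrite /bnd in hb; have := hpos_spec a b i j; case=> [h|[h|[h|h]]].
- by left.
- by right; left; lia.
- by right; right; left; lia.
- by right; right; right; lia.
Qed.

Lemma pc_hpos a b i j : 3 <= a -> 3 <= b -> i <= a -> j <= b -> bnd a b i j ->
  pci a b (hpos a b i j) = i /\ pcj a b (hpos a b i j) = j /\ hpos a b i j < 2 * a + 2 * b.
Proof.
move=> ha hb hi hj hbd; have := hpos_spec a b i j; have := pc_spec a b (hpos a b i j).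
rewrite /bnd in hbd; lia.
Qed.

Lemma hpos_pc a b t : 3 <= a -> 3 <= b -> t < 2 * a + 2 * b ->
  hpos a b (pci a b t) (pcj a b t) = t /\ pci a b t <= a /\ pcj a b t <= b /\
      bnd a b (pci a b t) (pcj a b t).
Proof.
move=> ha hb ht; have := pc_spec a b t; have := hpos_spec a b (pci a b t) (pcj a b t).
rewrite /bnd; lia.
Qed.

Lemma pc_bnd a b t : 3 <= a -> 3 <= b ->
  pci a b t <= a /\ pcj a b t <= b /\ bnd a b (pci a b t) (pcj a b t).
Proof. move=> ha hb; have := pc_spec a b t; rewrite /bnd; lia. Qed.

Definition gadj (i1 j1 i2 j2 : nat) :=
  (i1 = i2 /\ (j1.+1 = j2 \/ j2.+1 = j1)) \/ (j1 = j2 /\ (i1.+1 = i2 \/ i2.+1 = i1)).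

Lemma pc_adj a b t : 3 <= a -> 3 <= b -> t.+1 < 2 * a + 2 * b ->
  gadj (pci a b t) (pcj a b t) (pci a b t.+1) (pcj a b t.+1).
Proof.
move=> ha hb ht; have := pc_spec a b t; have := pc_spec a b t.+1; rewrite /gadj; lia.
Qed.

Lemma hpos_adj a b i1 j1 i2 j2 : 3 <= a -> 3 <= b -> i1 <= a -> j1 <= b -> i2 <= a -> j2 <= b ->
  bnd a b i1 j1 -> bnd a b i2 j2 -> gadj i1 j1 i2 j2 ->
  let p := hpos a b i1 j1 in let q := hpos a b i2 j2 in
  q = p.+1 \/ p = q.+1 \/ (p = (2 * a + 2 * b).-1 /\ q = 0) \/ (q = (2 * a + 2 * b).-1 /\ p = 0).
Proof.
move=> ha hb h1 h2 h3 h4 b1 b2 g /=.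
rewrite /bnd /gadj in b1 b2 g *.
move: (hpos_specb a b i1 j1 h1 h2 b1) (hpos_specb a b i2 j2 h3 h4 b2) => [h|[h|[h|h]]] [h'|[h'|[h'|h']]];
case: g => [[e1 [e2|e2]]|[e1 [e2|e2]]]; clear b1 b2; lia.
Qed.

Set Implicit Arguments. Unset Strict Implicit. Unset Printing Implicit Defensive.

Section Gen.
Variables (V : finType) (adj : rel V) (k : nat).

Definition trees (f : {ffun V -> 'I_k}) : {set {ffun 'I_k -> {set {set V}}}} :=
  [set F : {ffun 'I_k -> {set {set V}}} | [forall i, is_spanning_tree adj (block f i) (F i)]].

Lemma weight_card f : st_weight adj f = #|trees f|.
Proof.
have -> : #|trees f| = #|(family (fun i => [pred F | is_spanning_tree adj (block f i) F]) : simpl_pred {dffun forall x : 'I_k, {set {set V}}})|.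
  by apply: eq_card => F; rewrite inE.
rewrite card_family /st_weight /num_spanning_trees.
rewrite foldrE big_image /=.
by apply: eq_bigr => i _; apply: eq_card => F; rewrite inE.
Qed.

Lemma tree_edge_in f F i e z : F \in trees f -> e \in F i -> z \in e -> f z = i.
Proof.
rewrite inE => /forallP /(_ i) /and4P [sub _ _ _] eF.
have := subsetP sub e eF; rewrite inE => /existsP [x /existsP [y /and4P [/eqP-> _]]].
move=> fx fy; rewrite !inE => /orP [] /eqP ->; by move: fx fy; rewrite /block !inE => /eqP ? /eqP ?.
Qed.

Lemma tree_edge_ne f F i e : F \in trees f -> e \in F i -> exists z, z \in e.
Proof.
rewrite inE => /forallP /(_ i) /and4P [sub _ _ _] eF.
have := subsetP sub e eF; rewrite inE => /existsP [x /existsP [y /and4P [/eqP-> _]]].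
by exists x; rewrite !inE eqxx.
Qed.

Lemma tree_edge_adj f F i e : F \in trees f -> e \in F i ->
  exists x y, [/\ e = [set x; y], adj x y, f x = i & f y = i].
Proof.
rewrite inE => /forallP /(_ i) /and4P [sub _ _ _] eF.
have := subsetP sub e eF; rewrite inE => /existsP [x /existsP [y /and4P [/eqP-> a]]].
by rewrite /block !inE => /eqP fx /eqP fy; exists x, y.
Qed.

Lemma trees_inj f : {in trees f &, injective (fun F : {ffun 'I_k -> {set {set V}}} => \bigcup_i F i)}.
Proof.
have H : forall F1 F2, F1 \in trees f -> F2 \in trees f ->
    \bigcup_i F1 i = \bigcup_i F2 i -> forall i, F1 i \subset F2 i.
  move=> F1 F2 T1 T2 eq i; apply/subsetP => e He.
  have : e \in \bigcup_j F2 j by rewrite -eq; apply/bigcupP; exists i.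
  case/bigcupP => j _ He2.
  have [z ze] := tree_edge_ne T1 He.
  have := tree_edge_in T1 He ze; have := tree_edge_in T2 He2 ze.
  by move=> -> ji; rewrite -ji.
move=> F1 F2 T1 T2 /= eq; apply/ffunP => i; apply/eqP; rewrite eqEsubset.
by rewrite H // H.
Qed.

Definition img f := [set \bigcup_i (F : {ffun 'I_k -> {set {set V}}}) i | F in trees f].

Lemma Zst_img : Z_st adj k = \sum_(U : {set {set V}}) #|[set f | U \in img f]|.
Proof.
rewrite /Z_st.
transitivity (\sum_f \sum_(U : {set {set V}}) (U \in img f : nat)).
  apply: eq_bigr => f _; rewrite weight_card -(card_in_imset (trees_inj (f:=f))).
  rewrite -sum1_card big_mkcond /=; apply: eq_bigr => U _.
  by rewrite /img; case: (U \in _).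
rewrite exchange_big; apply: eq_bigr => U _.
rewrite -sum1_card [RHS]big_mkcond /=; apply: eq_bigr => f _.
by rewrite inE; case: (U \in _).
Qed.

Lemma sum_block (f : {ffun V -> 'I_k}) : \sum_i #|block f i| = #|V|.
Proof.
under eq_bigr do rewrite -sum1_card big_mkcond /=.
rewrite exchange_big /= -sum1_card [RHS]big_mkcond /=; apply: eq_bigr => v _.
rewrite (bigD1 (f v)) //= /block inE eqxx big1 // => i /negbTE.
by rewrite inE eq_sym => ->.
Qed.

Lemma card_bigcup_trees f F : F \in trees f -> #|\bigcup_i F i| = \sum_i #|F i|.
Proof.
move=> TF.
under [RHS]eq_bigr do rewrite -sum1_card big_mkcond /=.
rewrite exchange_big /= -sum1_card [LHS]big_mkcond /=; apply: eq_bigr => e _.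
case: ifP => [/bigcupP [i _ Hi] | Hn].
  rewrite (bigD1 i) //= Hi big1 // => j ji; case: ifP => // Hj.
  have [z ze] := tree_edge_ne TF Hi.
  by move: ji; rewrite -(tree_edge_in TF Hi ze) -(tree_edge_in TF Hj ze) eqxx.
rewrite big1 // => j _; case: ifP => // Hj.
by move: Hn; rewrite (_ : e \in _ = true) //; apply/bigcupP; exists j.
Qed.

Lemma img_D f U : U \in img f ->
  U \subset induced_edges adj setT /\ #|U| = #|V| - k.
Proof.
case/imsetP => F TF ->; split.
  apply/bigcupsP => i _; apply/subsetP => e He.
  have [x [y [-> a _ _]]] := tree_edge_adj TF He.
  by rewrite inE; apply/existsP; exists x; apply/existsP; exists y; rewrite eqxx a !inE.
rewrite (card_bigcup_trees TF) -(sum_block f).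
have H : forall i, #|F i| + 1 = #|block f i|.
  move: TF; rewrite inE => /forallP TF i; have /and4P [_ ne /eqP c _] := TF i.
  rewrite c subnK // card_gt0 //.
have -> : \sum_i #|block f i| = \sum_i #|F i| + \sum_(i < k) 1.
  by rewrite -big_split /=; apply: eq_bigr => i _; rewrite H.
by rewrite sum1_card card_ord addnK.
Qed.

Lemma compat_const f g U u v : U \in img f -> U \in img g -> f u = f v -> g u = g v.
Proof.
case/imsetP => Ff Tf ->; case/imsetP => Fg Tg eqU fuv.
have := Tf; rewrite inE => /forallP /(_ (f u)) /and4P [_ _ _ /forallP /(_ u)].
rewrite /block inE eqxx /= => /forallP /(_ v); rewrite inE fuv eqxx /=.
have edge : forall a b, [set a; b] \in Ff (f v) -> g a = g b.
  move=> a b Hab.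
  have : [set a; b] \in \bigcup_i Fg i by rewrite -eqU; apply/bigcupP; exists (f v).
  case/bigcupP => l _ Hl.
  by rewrite (tree_edge_in Tg Hl (set21 a b)) (tree_edge_in Tg Hl (set22 a b)).
move: (f v) edge => j edge.
case/connectP => p pth ->; elim: p u pth {fuv} => /= [|w p IH] u //.
by move=> /andP [e pth]; rewrite (edge _ _ e) (IH w).
Qed.

Lemma label_bound U : #|[set f | U \in img f]| <= k`!.
Proof.
case: (set_0Vmem [set f | U \in img f]) => [-> | [f0]]; first by rewrite cards0.
rewrite inE => H0.
have : forall j, exists v, f0 v == j.
  case/imsetP: (H0) => F TF _; move: TF; rewrite inE => /forallP TF j.
  have /and4P [_ ne _ _] := TF j; case/set0Pn: ne => v; rewrite inE => ?.
  by exists v.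
case/fin_all_exists => r Hr.
pose psi (f : {ffun V -> 'I_k}) : {ffun 'I_k -> 'I_k} := [ffun j => f (r j)].
rewrite -(card_in_imset (f:=psi)).
  have -> : k`! = #|[set g : {ffun 'I_k -> 'I_k} | injectiveb g]| by rewrite card_inj_ffuns card_ord ffactnn.
  apply: subset_leq_card.
  apply/subsetP => g /imsetP [f Hf ->]; rewrite inE; apply/injectiveP => j l.
  rewrite !ffunE => e; rewrite inE in Hf.
  have := compat_const Hf H0 e.
  by rewrite (eqP (Hr j)) (eqP (Hr l)).
move=> f1 f2 /[!inE] H1 H2 e; apply/ffunP => v.
have E : f0 v = f0 (r (f0 v)) by rewrite (eqP (Hr _)).
rewrite (compat_const H0 H1 E) (compat_const H0 H2 E).
by have := congr1 (fun g : {ffun 'I_k -> 'I_k} => g (f0 v)) e; rewrite /psi !ffunE.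
Qed.

Lemma Zst_bound : Z_st adj k <= k`! * 'C(#|induced_edges adj setT|, #|V| - k).
Proof.
rewrite Zst_img -cards_draws -sum1_card big_distrr /= muln1.
rewrite (bigID (fun U : {set {set V}} => U \in [set A : {set {set V}} | A \subset induced_edges adj setT & #|A| == #|V| - k])) /=.
rewrite [X in _ + X]big1 ?addn0.
  by apply: leq_sum => U _; apply: label_bound.
move=> U HU; apply/eqP; rewrite cards_eq0; apply/eqP/setP => f; rewrite !inE.
apply/negP => Hf; move: HU; rewrite inE; have [-> ->] := img_D Hf.
by rewrite eqxx.
Qed.
End Gen.

Section Cyc.
Variables (V : finType) (adj : rel V) (N : nat) (pos : V -> nat) (phi : nat -> V).
Hypothesis H1 : forall v, pos v < N.
Hypothesis H2 : forall v, phi (pos v) = v.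
Hypothesis H3 : forall t, t < N -> pos (phi t) = t.
Hypothesis H4 : forall t, t.+1 < N -> adj (phi t) (phi t.+1).
Hypothesis H5 : forall x y, adj x y ->
  pos y = (pos x).+1 \/ pos x = (pos y).+1 \/
      (pos x = N.-1 /\ pos y = 0) \/ (pos y = N.-1 /\ pos x = 0).

Lemma card_V : #|V| = N.
Proof.
rewrite -(card_ord N); apply: (@bij_eq_card _ _ (fun v => Ordinal (H1 v))).
exists (fun t : 'I_N => phi t) => [v|t] /=; first exact: H2.
by apply: val_inj => /=; rewrite H3.
Qed.

Lemma edges_le : #|induced_edges adj setT| <= #|V|.
Proof.
pose g v := [set v; phi ((pos v).+1 %% N)].
rewrite -cardsT; apply: (leq_trans _ (leq_imset_card g _)).
apply: subset_leq_card; apply/subsetP => e.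
rewrite inE => /existsP [x /existsP [y /and4P [/eqP -> a _ _]]].
have hx := H1 x; have hy := H1 y.
case: (H5 a) => [e1|[e1|[[e1 e2]|[e1 e2]]]]; apply/imsetP.
- by exists x => //; rewrite /g -e1 modn_small // H2.
- by exists y => //; rewrite /g -e1 modn_small // H2 setUC.
- exists x => //; rewrite /g e1 prednK ?modnn; last by case: (N) hx.
  by rewrite -e2 H2.
- exists y => //; rewrite /g e1 prednK ?modnn; last by case: (N) hx.
  by rewrite -e2 H2 setUC.
Qed.

Variables (k s : nat).
Hypothesis Hks : k * s = N.
Hypothesis s_gt0 : 0 < s.

Lemma fb_lt v : pos v %/ s < k.
Proof. by rewrite ltn_divLR // Hks. Qed.

Definition fb : {ffun V -> 'I_k} := [ffun v => Ordinal (fb_lt v)].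

Lemma ist_lt (i : 'I_k) t : t < s -> i * s + t < N.
Proof.
move=> ts; rewrite -Hks; apply: (@leq_trans (i.+1 * s)).
  by rewrite mulSn; lia.
by rewrite leq_mul2r ltn_ord orbT.
Qed.

Lemma block_fb i : block fb i = [set phi (i * s + t) | t : 'I_s].
Proof.
apply/setP => v; rewrite /block inE ffunE; apply/eqP/imsetP.
  move=> /(congr1 val) /= Hv.
  exists (Ordinal (ltn_pmod (pos v) s_gt0)) => //=.
  by rewrite -Hv -divn_eq H2.
case => t _ ->; apply/val_inj => /=.
by rewrite H3 ?ist_lt // divnMDl // divn_small // addn0.
Qed.

Lemma card_block i : #|block fb i| = s.
Proof.
rewrite block_fb card_imset ?card_ord // => t1 t2 /(congr1 pos).
by rewrite !H3 ?ist_lt // => /addnI /val_inj.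
Qed.

Lemma fb_balanced : balanced fb.
Proof. by apply/forallP => i; apply/forallP => j; rewrite !card_block. Qed.

Definition Ftree (i : 'I_k) : {set {set V}} :=
  [set [set phi (i * s + t); phi (i * s + t).+1] | t : 'I_s.-1].

Lemma in_block (i : 'I_k) t : t < s -> phi (i * s + t) \in block fb i.
Proof. by move=> ts; rewrite block_fb; apply/imsetP; exists (Ordinal ts). Qed.

Lemma Ftree_ok i : is_spanning_tree adj (block fb i) (Ftree i).
Proof.
have ts1 : forall t : 'I_s.-1, t.+1 < s.
  by move=> t; have := ltn_ord t; lia.
apply/and4P; split.
- apply/subsetP => e /imsetP [t _ ->]; rewrite inE.
  apply/existsP; exists (phi (i * s + t)); apply/existsP; exists (phi (i * s + t).+1).
  have h := ist_lt i (ts1 t).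
  rewrite eqxx H4 ?in_block ?(ltnW (ts1 t)) //= -addnS ?in_block //.
- by apply/set0Pn; exists (phi (i * s + 0)); apply: in_block.
- rewrite card_block card_in_imset ?card_ord ?subn1 // => t1 t2 _ _ /= E.
  have h1 := ist_lt i (ltnW (ts1 t1)); have h2 := ist_lt i (ltnW (ts1 t2)).
  have h1' := ist_lt i (ts1 t1); have h2' := ist_lt i (ts1 t2).
  rewrite -!addnS in E h1' h2'.
  have a1 : phi (i * s + t1) \in [set phi (i * s + t2); phi (i * s + t2.+1)].
    by rewrite -E set21.
  have b1 : phi (i * s + t1.+1) \in [set phi (i * s + t2); phi (i * s + t2.+1)].
    by rewrite -E set22.
  apply: ord_inj.
  move: a1 b1; rewrite !inE => /orP [] /eqP /(congr1 pos) ea /orP [] /eqP /(congr1 pos) eb;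
  move: ea eb; rewrite !H3; lia.
- set e := (fun u v : V => [set u; v] \in Ftree i).
  have sym : connect_sym e.
    by apply: sym_connect_sym => u v; rewrite /e setUC.
  have c0 : forall t, t < s -> connect e (phi (i * s)) (phi (i * s + t)).
    elim=> [|t IH] ts; first by rewrite addn0 connect0.
    apply: (connect_trans (IH (ltnW ts))); apply: connect1.
    rewrite /e addnS; apply/imsetP.
    have ts' : t < s.-1 by lia.
    by exists (Ordinal ts').
  apply/forallP => x; apply/implyP; rewrite block_fb => /imsetP [t1 _ ->].
  apply/forallP => y; apply/implyP => /imsetP [t2 _ ->].
  apply: (connect_trans _ (c0 _ (ltn_ord t2))).
  by rewrite sym; apply: c0.
Qed.

Lemma Zbal_pos : 0 < Z_balanced adj k.
Proof.
rewrite /Z_balanced (bigD1 fb) ?fb_balanced //=.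
apply: leq_trans (leq_addr _ _).
rewrite /st_weight prodn_gt0 // => i.
rewrite /num_spanning_trees card_gt0; apply/set0Pn; exists (Ftree i).
by rewrite inE Ftree_ok.
Qed.
End Cyc.

Section Hole.
Variables (m n : nat).
Hypothesis hm : 3 <= m.
Hypothesis hn : 3 <= n.

Local Notation VV := (hole_vertex m.+1 n.+1).

Lemma ob_bnd (p : 'I_m.+1 * 'I_n.+1) : on_boundary p <-> bnd m n p.1 p.2.
Proof.
rewrite /on_boundary /bnd /=; split.
  by case/or4P => /eqP h; lia.
by case=> [->|[->|[->|->]]]; rewrite eqxx ?orbT.
Qed.

Definition v0 : VV := exist _ (ord0, ord0) isT.

Definition phiH (t : nat) : VV := insubd v0 (inord (pci m n t), inord (pcj m n t)).
Definition posH (v : VV) : nat := hpos m n (val v).1 (val v).2.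

Lemma phiH_coords t : ((val (phiH t)).1 : nat) = pci m n t /\ ((val (phiH t)).2 : nat) = pcj m n t.
Proof.
have [b1 [b2 b3]] := pc_bnd m n t hm hn.
rewrite /phiH insubdK /=; last by apply/ob_bnd; rewrite /= !inordK.
by rewrite !inordK.
Qed.

Lemma vbnd (v : VV) : (val v).1 <= m /\ (val v).2 <= n /\ bnd m n (val v).1 (val v).2.
Proof.
case: v => [[i j] /= /ob_bnd hb]; split; last split => //.
  by rewrite -ltnS ltn_ord.
by rewrite -ltnS ltn_ord.
Qed.

Lemma HH1 v : posH v < 2 * m + 2 * n.
Proof.
have [h1 [h2 h3]] := vbnd v.
by have [_ [_ ->]] := pc_hpos m n _ _ hm hn h1 h2 h3.
Qed.

Lemma HH2 v : phiH (posH v) = v.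
Proof.
apply: val_inj; have [h1 [h2 h3]] := vbnd v.
have [e1 [e2 _]] := pc_hpos m n _ _ hm hn h1 h2 h3.
case: v h1 h2 h3 e1 e2 => [[i j] pb] /= h1 h2 h3 e1 e2.
by rewrite /phiH /posH /= e1 e2 !inord_val insubdK.
Qed.

Lemma HH3 t : t < 2 * m + 2 * n -> posH (phiH t) = t.
Proof.
move=> ht; have [c1 c2] := phiH_coords t.
rewrite /posH c1 c2; by have [-> _] := hpos_pc m n t hm hn ht.
Qed.

Lemma gadj_grid (p q : 'I_m.+1 * 'I_n.+1) :
  grid_adj p q = true <-> gadj p.1 p.2 q.1 q.2.
Proof. rewrite /grid_adj /gadj -!val_eqE /=; lia. Qed.

Lemma HH4 t : t.+1 < 2 * m + 2 * n -> hole_adj (phiH t) (phiH t.+1).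
Proof.
move=> ht; rewrite /hole_adj; apply/gadj_grid.
have [c1 c2] := phiH_coords t; have [d1 d2] := phiH_coords t.+1.
rewrite c1 c2 d1 d2; exact: pc_adj.
Qed.

Lemma HH5 x y : hole_adj x y ->
  posH y = (posH x).+1 \/ posH x = (posH y).+1 \/
  (posH x = (2 * m + 2 * n).-1 /\ posH y = 0) \/ (posH y = (2 * m + 2 * n).-1 /\ posH x = 0).
Proof.
rewrite /hole_adj => /gadj_grid g.
have [h1 [h2 h3]] := vbnd x; have [h4 [h5 h6]] := vbnd y.
exact: (hpos_adj m n _ _ _ _ hm hn h1 h2 h4 h5 h3 h6 g).
Qed.
End Hole.

Lemma ffact_le_exp a b : a ^_ b <= a ^ b.
Proof.
rewrite ffact_prod.
apply: (@leq_trans (\prod_(i < b) a)); first by apply: leq_prod => i _; apply: leq_subr.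
by rewrite prod_nat_const card_ord.
Qed.

Lemma Zbal_le_Zst (V : finType) (adj : rel V) k : Z_balanced adj k <= Z_st adj k.
Proof. by rewrite /Z_st (bigID (@balanced V k)) /= leq_addr. Qed.

Local Open Scope ring_scope.

Theorem theorem5p3 (R : realFieldType) :
  exists c : R, exists C : R, 0 < c /\ 0 < C /\
    forall m n k : nat, (4 <= m)%N -> (4 <= n)%N -> (0 < k)%N ->
      (k %| #|[set: hole_vertex m n]|)%N ->
      c / ((m + n)%:R ^+ k * C ^+ k) <=
        (Z_balanced (@hole_adj m n) k)%:R / (Z_st (@hole_adj m n) k)%:R.
Proof.
exists 1, 2; split => //; split => //.
move=> [//|m] [//|n] k hm hn hk.
have hm' : (3 <= m)%N by []. have hn' : (3 <= n)%N by [].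
have cV := card_V (HH1 hm' hn') (HH2 hm' hn') (HH3 hm' hn').
rewrite cardsT cV => kN.
set N := (2 * m + 2 * n)%N.
set s := (N %/ k)%N.
have Hks : (k * s)%N = N by rewrite mulnC divnK.
have s_gt0 : (0 < s)%N by move: Hks; rewrite /N; case: (s) => [|//]; rewrite muln0; lia.
have Zb := Zbal_pos (HH1 hm' hn') (HH2 hm' hn') (HH3 hm' hn') (HH4 hm' hn') Hks s_gt0.
set Zb' := Z_balanced _ _ in Zb *.
set Zs := Z_st _ _.
have Zs_pos : (0 < Zs)%N by apply: leq_trans Zb (Zbal_le_Zst _ _).
have Zs_le : (Zs <= N ^ k)%N.
  apply: (leq_trans (Zst_bound _ _)).
  have hE := edges_le (HH1 hm' hn') (HH2 hm' hn') (HH5 hm' hn').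
  rewrite cV in hE *.
  have kle : (k <= N)%N by apply: dvdn_leq => //; rewrite /N; lia.
  apply: (@leq_trans (k`! * 'C(N, N - k))%N).
    by rewrite leq_mul2l leq_bin2l ?orbT.
  by rewrite bin_sub // mulnC bin_ffact ffact_le_exp.
have Zs_pos' : (0 : R) < Zs%:R by rewrite ltr0n.
have X_pos : (0 : R) < (m.+1 + n.+1)%:R ^+ k * 2 ^+ k.
  by rewrite mulr_gt0 // exprn_gt0 // ltr0n.
rewrite ler_pdivrMr // mulrC mulrA ler_pdivlMr // mul1r.
rewrite -natrX -natrX -!natrM ler_nat.
apply: (leq_trans Zs_le); apply: (@leq_trans ((m.+1 + n.+1) ^ k * 2 ^ k)%N).
  by rewrite -expnMn leq_exp2r //; rewrite /N; lia.
by rewrite leq_pmulr.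
Qed.
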